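(* Let $\mathbf{X}\subseteq\mathbb{R}_+^n$ be a closed interval and $\mathrm{IC}(\mathbf{a}_0,\dots,\mathbf{a}_{n-1})$ an interval circulant matrix. Then $\mathrm{IC}(\mathbf{a}_0,\dots,\mathbf{a}_{n-1})$ is tolerance $\mathbf{X}$-robust, i.e. for every $A\in\mathrm{IC}(\mathbf{a}_0,\dots,\mathbf{a}_{n-1})$ there exists $x\in\mathbf{X}$ with $x\in\mathrm{Attr}(A)$, if and only if $\mathrm{Attr}(A^{(k)})\cap\mathbf{X}\ne\emptyset$ for every $k\in\{0,\dots,n-1\}$. Equivalently, if and only if for every $k$ with $A^{(k)}\neq0$ the system $\lambda(A^{(k)})(A^{(k)})^{n^2}\otimes y=(A^{(k)})^{n^2+1}\otimes y$ has a solution $y\in\mathbf{X}$.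
   Context: Max algebra on $\mathbb{R}_+$: $\oplus=\max$, ordinary product, $A^t$ max-algebraic power; $\lambda(A)$ greatest max-algebraic eigenvalue (maximum cycle geometric mean); $\mathrm{Attr}(A)=\{x\in\mathbb{R}_+^n: A^{t+1}\otimes x=\lambda(A)A^t\otimes x\text{ for some }t\ge0\}$. A closed interval is $\mathbf{X}=\prod_i[\underline{x}_i,\overline{x}_i]\subseteq\mathbb{R}_+^n$. $\mathrm{Circ}(a_0,\dots,a_{n-1})$ has entries $A_{i,j}=a_t$, $t\equiv j-i\pmod n$; $\mathrm{IC}(\mathbf{a}_0,\dots,\mathbf{a}_{n-1})$ is the set of all $\mathrm{Circ}(a_0,\dots,a_{n-1})$ with $a_t\in\mathbf{a}_t$, each $\mathbf{a}_t\subseteq\mathbb{R}_+$ a nonempty interval of one of the forms $[\underline{a}_t,\overline{a}_t]$, $(\underline{a}_t,\overline{a}_t)$, $(\underline{a}_t,\overline{a}_t]$, $[\underline{a}_t,\overline{a}_t)$. $A^{(k)}=\mathrm{Circ}(\underline{a}_0,\dots,\underline{a}_{k-1},\overline{a}_k,\underline{a}_{k+1},\dots,\underline{a}_{n-1})$. *)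

(* Defs.v *)
From Stdlib Require Import Reals List Arith.
Import ListNotations.
Open Scope R_scope.

(* n x n matrices / n-vectors over R_+ are represented as functions on nat;
   only indices < n are meaningful. *)
Definition mat := nat -> nat -> R.
Definition vec := nat -> R.

(* max-algebraic sum over indices 0..m-1 (0 is neutral on R_+) *)
Fixpoint mmax (m : nat) (f : nat -> R) : R :=
  match m with O => 0 | S k => Rmax (mmax k f) (f k) end.

Definition mmul (n : nat) (A B : mat) : mat :=
  fun i j => mmax n (fun k => A i k * B k j).

Definition mid : mat := fun i j => if Nat.eqb i j then 1 else 0.

Fixpoint mpow (n : nat) (A : mat) (t : nat) : mat :=
  match t with O => mid | S s => mmul n A (mpow n A s) end.

Definition mvec (n : nat) (A : mat) (x : vec) : vec :=
  fun i => mmax n (fun j => A i j * x j).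

Fixpoint seqs (n k : nat) : list (list nat) :=
  match k with
  | O => [[]]
  | S k' => flat_map (fun s => map (fun i => i :: s) (seq 0 n)) (seqs n k')
  end.

(* weight of the cycle i0 -> i1 -> ... -> i_{k-1} -> i0 *)
Fixpoint cw_aux (A : mat) (first : nat) (l : list nat) : R :=
  match l with
  | [] => 1
  | [x] => A x first
  | x :: ((y :: _) as t) => A x y * cw_aux A first t
  end.

Definition cycle_weight (A : mat) (l : list nat) : R :=
  match l with [] => 1 | x :: _ => cw_aux A x l end.

Definition gmean (w : R) (k : nat) : R :=
  if Rle_dec w 0 then 0 else Rpower w (/ INR k).

(* lambda(A): maximum cycle geometric mean (cycles of length 1..n suffice) *)
Definition lam (n : nat) (A : mat) : R :=
  fold_right Rmax 0
    (map (fun l => gmean (cycle_weight A l) (length l))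
         (flat_map (fun k => seqs n k) (seq 1 n))).

Definition Attr (n : nat) (A : mat) (x : vec) : Prop :=
  exists t : nat, forall i, (i < n)%nat ->
    mvec n (mpow n A (S t)) x i = lam n A * mvec n (mpow n A t) x i.

Definition inX (n : nat) (xl xu : vec) (x : vec) : Prop :=
  forall i, (i < n)%nat -> xl i <= x i <= xu i.

Definition circ (n : nat) (a : nat -> R) : mat :=
  fun i j => a ((j + n - i) mod n)%nat.

(* interval a_t with endpoints al t <= au t; lc t / uc t say whether the
   lower / upper endpoint is included *)
Definition inI (al au : nat -> R) (lc uc : nat -> bool) (t : nat) (a : R) : Prop :=
  (if lc t then al t <= a else al t < a) /\ (if uc t then a <= au t else a < au t).

Definition Ak (n : nat) (al au : nat -> R) (k : nat) : mat :=
  circ n (fun t => if Nat.eqb t k then au t else al t).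

Definition mnonzero (n : nat) (A : mat) : Prop :=
  exists i j, (i < n)%nat /\ (j < n)%nat /\ A i j <> 0.

Definition tol_robust (n : nat) (al au : nat -> R) (lc uc : nat -> bool)
  (xl xu : vec) : Prop :=
  forall a : nat -> R, (forall t, (t < n)%nat -> inI al au lc uc t (a t)) ->
    exists x, inX n xl xu x /\ Attr n (circ n a) x.

(* Main.v *)
Require Import Defs.
From Stdlib Require Import Reals List Arith.
From Stdlib Require Import Lia Lra.
Import ListNotations.
Open Scope R_scope.


Lemma mmax_ge0 m f : 0 <= mmax m f.
Proof. induction m; simpl; [lra|]. apply Rle_trans with (mmax m f); auto. apply Rmax_l. Qed.

Lemma mmax_ge m f k : (k < m)%nat -> f k <= mmax m f.
Proof.
  induction m; intros H; [lia|]. simpl.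
  destruct (Nat.eq_dec k m) as [->|Hne]; [apply Rmax_r|].
  apply Rle_trans with (mmax m f); [apply IHm; lia|apply Rmax_l].
Qed.

Lemma mmax_le m f M : 0 <= M -> (forall k, (k < m)%nat -> f k <= M) -> mmax m f <= M.
Proof.
  induction m; intros H0 H; simpl; auto.
  apply Rmax_lub; [apply IHm; auto|apply H; lia].
Qed.

Lemma mmax_ex m f : (0 < m)%nat -> (forall k, (k < m)%nat -> 0 <= f k) ->
  exists k, (k < m)%nat /\ mmax m f = f k.
Proof.
  induction m; intros Hm Hf; [lia|]. simpl.
  destruct m.
  - exists 0%nat. split; [lia|]. simpl. apply Rmax_right. apply Hf; lia.
  - destruct IHm as [k [Hk E]]; [lia| intros; apply Hf; lia|].
    destruct (Rle_dec (mmax (S m) f) (f (S m))).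
    + exists (S m). split; [lia|]. apply Rmax_right; auto.
    + exists k. split; [lia|]. rewrite Rmax_left; [auto|lra].
Qed.

Lemma mmax_mono m f g : (forall k, (k < m)%nat -> f k <= g k) -> mmax m f <= mmax m g.
Proof.
  intros H. apply mmax_le; [apply mmax_ge0|]. intros k Hk.
  apply Rle_trans with (g k); [auto|apply mmax_ge; auto].
Qed.

Lemma mmax_ext m f g : (forall k, (k < m)%nat -> f k = g k) -> mmax m f = mmax m g.
Proof. intros H; apply Rle_antisym; apply mmax_mono; intros; rewrite H; auto; lra. Qed.

Lemma mmax_scal m f c : 0 <= c -> mmax m (fun k => c * f k) = c * mmax m f.
Proof.
  intros Hc. induction m; simpl; [ring|]. rewrite IHm.
  unfold Rmax. destruct (Rle_dec (c * mmax m f) (c * f m)), (Rle_dec (mmax m f) (f m)); auto.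
  - destruct Hc as [Hc|<-]; [|ring]. exfalso; apply n; apply Rmult_le_reg_l with c; auto.
  - apply Rle_antisym; auto. apply Rmult_le_compat_l; auto. lra.
Qed.

Lemma mmax_max m f g : (forall k, (k<m)%nat -> 0 <= f k) -> (forall k, (k<m)%nat -> 0 <= g k) ->
  mmax m (fun k => Rmax (f k) (g k)) = Rmax (mmax m f) (mmax m g).
Proof.
  intros Hf Hg. apply Rle_antisym.
  - apply mmax_le. apply Rle_trans with (mmax m f); [apply mmax_ge0|apply Rmax_l].
    intros k Hk. apply Rmax_lub.
    + apply Rle_trans with (mmax m f); [apply mmax_ge; auto|apply Rmax_l].
    + apply Rle_trans with (mmax m g); [apply mmax_ge; auto|apply Rmax_r].
  - apply Rmax_lub; apply mmax_mono; intros; [apply Rmax_l|apply Rmax_r].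
Qed.

Lemma mod2 n x : (0 < n)%nat -> (x < 2 * n)%nat -> Nat.modulo x n = if Nat.ltb x n then x else (x - n)%nat.
Proof.
  intros Hn Hx. destruct (Nat.ltb_spec x n).
  - apply Nat.mod_small; auto.
  - replace x with ((x - n) + 1 * n)%nat at 1 by lia. rewrite Nat.Div0.mod_add by lia.
    apply Nat.mod_small; lia.
Qed.

Lemma mvec_assoc n (A B : mat) x i : (i < n)%nat ->
  (forall p q, (p<n)%nat -> (q<n)%nat -> 0 <= A p q) ->
  (forall p q, (p<n)%nat -> (q<n)%nat -> 0 <= B p q) ->
  (forall q, (q<n)%nat -> 0 <= x q) ->
  mvec n (mmul n A B) x i = mvec n A (mvec n B x) i.
Proof.
  intros Hi HA HB Hx. unfold mvec, mmul. apply Rle_antisym.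
  - apply mmax_le; [apply mmax_ge0|]. intros j Hj.
    rewrite Rmult_comm, <- mmax_scal by auto.
    apply mmax_le; [apply mmax_ge0|]. intros k Hk.
    apply Rle_trans with (A i k * mmax n (fun j0 => B k j0 * x j0)); [|apply (mmax_ge n (fun k0 => A i k0 * mmax n (fun j0 => B k0 j0 * x j0))); auto].
    rewrite Rmult_comm, Rmult_assoc. apply Rmult_le_compat_l; auto.
    apply (mmax_ge n (fun j0 => B k j0 * x j0)); auto.
  - apply mmax_le; [apply mmax_ge0|]. intros k Hk.
    rewrite <- mmax_scal by auto.
    apply mmax_le; [apply mmax_ge0|]. intros j Hj.
    apply Rle_trans with (mmax n (fun k0 => A i k0 * B k0 j) * x j); [|apply (mmax_ge n (fun j0 => mmax n (fun k0 => A i k0 * B k0 j0) * x j0)); auto].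
    rewrite <- Rmult_assoc. apply Rmult_le_compat_r; auto.
    apply (mmax_ge n (fun k0 => A i k0 * B k0 j)); auto.
Qed.

Lemma mvec_mid n x i : (i < n)%nat -> 0 <= x i -> mvec n mid x i = x i.
Proof.
  intros Hi Hx. unfold mvec, mid. apply Rle_antisym.
  - apply mmax_le; auto. intros j Hj. destruct (Nat.eqb_spec i j); [subst; lra|]. lra.
  - apply Rle_trans with ((if Nat.eqb i i then 1 else 0) * x i).
    + rewrite Nat.eqb_refl; lra.
    + apply (mmax_ge n (fun j => (if Nat.eqb i j then 1 else 0) * x j)); auto.
Qed.
Section Circ.
Variable n : nat.
Hypothesis Hn : (0 < n)%nat.

Definition nonneg (a : nat -> R) := forall t, (t < n)%nat -> 0 <= a t.
Definition Fo (a : nat -> R) (y : vec) : vec := mvec n (circ n a) y.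
Fixpoint Fit (a : nat -> R) (t : nat) (y : vec) : vec :=
  match t with O => y | S t => Fo a (Fit a t y) end.

Lemma circ_nonneg a i j : nonneg a -> 0 <= circ n a i j.
Proof. intros Ha. unfold circ. apply Ha. apply Nat.mod_upper_bound; lia. Qed.

Lemma mod_lt x : (x mod n < n)%nat.
Proof. apply Nat.mod_upper_bound; lia. Qed.

Lemma Fo_reindex a y i : (i < n)%nat ->
  Fo a y i = mmax n (fun s => a s * y ((i + s) mod n)%nat).
Proof.
  intros Hi. unfold Fo, mvec, circ. apply Rle_antisym.
  - apply mmax_le; [apply mmax_ge0|]. intros j Hj.
    set (s := ((j + n - i) mod n)%nat).
    assert (E : ((i + s) mod n)%nat = j).
    { unfold s. rewrite Nat.Div0.add_mod_idemp_r. replace (i + (j + n - i))%nat with (j + 1 * n)%nat by lia.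
      rewrite Nat.Div0.mod_add. apply Nat.mod_small; auto. }
    rewrite <- E. apply (mmax_ge n (fun s0 => a s0 * y ((i + s0) mod n)%nat)). apply mod_lt.
  - apply mmax_le; [apply mmax_ge0|]. intros s Hs.
    set (j := ((i + s) mod n)%nat).
    assert (E : ((j + n - i) mod n)%nat = s).
    { unfold j. rewrite (mod2 n (i+s)) by lia. destruct (Nat.ltb_spec (i+s) n).
      - replace (i + s + n - i)%nat with (s + 1 * n)%nat by lia. rewrite Nat.Div0.mod_add. apply Nat.mod_small; auto.
      - replace (i + s - n + n - i)%nat with s by lia. apply Nat.mod_small; auto. }
    rewrite <- E at 1. apply (mmax_ge n (fun j0 => a ((j0 + n - i) mod n)%nat * y j0)). apply mod_lt.
Qed.

Lemma Fo_ext a y z i : (forall j, (j < n)%nat -> y j = z j) -> Fo a y i = Fo a z i.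
Proof. intros H. unfold Fo, mvec. apply mmax_ext. intros. rewrite H; auto. Qed.

Lemma Fo_nonneg a y i : 0 <= Fo a y i.
Proof. apply mmax_ge0. Qed.

Lemma Fo_mono a y z i : nonneg a -> (forall j, (j < n)%nat -> y j <= z j) -> Fo a y i <= Fo a z i.
Proof.
  intros Ha H. unfold Fo, mvec. apply mmax_mono. intros. apply Rmult_le_compat_l; auto.
  apply circ_nonneg; auto.
Qed.

Lemma Fo_scal a y c i : 0 <= c -> Fo a (fun j => c * y j) i = c * Fo a y i.
Proof.
  intros Hc. unfold Fo, mvec. rewrite <- mmax_scal by auto. apply mmax_ext. intros; ring.
Qed.

Lemma Fo_ascal a y c i : 0 <= c -> Fo (fun t => c * a t) y i = c * Fo a y i.
Proof.
  intros Hc. unfold Fo, mvec, circ. rewrite <- mmax_scal by auto. apply mmax_ext. intros; ring.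
Qed.

Lemma Fo_amono a b y i : nonneg a -> (forall t, (t < n)%nat -> a t <= b t) ->
  (forall j, (j < n)%nat -> 0 <= y j) -> Fo a y i <= Fo b y i.
Proof.
  intros Ha Hab Hy. unfold Fo, mvec, circ. apply mmax_mono. intros.
  apply Rmult_le_compat_r; auto. apply Hab, mod_lt.
Qed.

Lemma Fo_max a y z i : nonneg a -> (forall j, (j < n)%nat -> 0 <= y j) -> (forall j, (j < n)%nat -> 0 <= z j) ->
  Fo a (fun j => Rmax (y j) (z j)) i = Rmax (Fo a y i) (Fo a z i).
Proof.
  intros Ha Hy Hz. unfold Fo, mvec. rewrite <- mmax_max.
  - apply mmax_ext. intros k Hk. rewrite RmaxRmult; auto. apply circ_nonneg; auto.
  - intros. apply Rmult_le_pos; auto. apply circ_nonneg; auto.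
  - intros. apply Rmult_le_pos; auto. apply circ_nonneg; auto.
Qed.

Lemma Fo_shift a y c i : (i < n)%nat ->
  Fo a (fun j => y ((j + c) mod n)%nat) i = Fo a y ((i + c) mod n)%nat.
Proof.
  intros Hi. rewrite !Fo_reindex by (auto; apply mod_lt). apply mmax_ext. intros s Hs.
  f_equal. f_equal. rewrite !Nat.Div0.add_mod_idemp_l. f_equal. lia.
Qed.

Lemma Fo_ge a y i k : nonneg a -> (forall j, (j < n)%nat -> 0 <= y j) -> (i < n)%nat -> (k < n)%nat ->
  a k * y ((i + k) mod n)%nat <= Fo a y i.
Proof.
  intros Ha Hy Hi Hk. rewrite Fo_reindex by auto.
  apply (mmax_ge n (fun s => a s * y ((i + s) mod n)%nat)); auto.
Qed.

Lemma Fit_add a p q y : Fit a (p + q) y = Fit a p (Fit a q y).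
Proof. induction p; simpl; auto. rewrite IHp; auto. Qed.

Lemma Fit_S' a t y : Fit a (S t) y = Fit a t (Fo a y).
Proof. replace (S t) with (t + 1)%nat by lia. rewrite Fit_add. auto. Qed.

Lemma Fit_ext a t y z i : (forall j, (j < n)%nat -> y j = z j) -> (i < n)%nat -> Fit a t y i = Fit a t z i.
Proof.
  intros H. revert i. induction t; simpl; intros i Hi; auto. apply Fo_ext. intros; auto.
Qed.

Lemma Fit_nonneg a t y i : (forall j, (j < n)%nat -> 0 <= y j) -> (i < n)%nat -> 0 <= Fit a t y i.
Proof. intros H Hi. destruct t; simpl; auto. apply Fo_nonneg. Qed.

Lemma Fit_mono a t y z i : nonneg a -> (forall j, (j < n)%nat -> y j <= z j) -> (i < n)%nat -> Fit a t y i <= Fit a t z i.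
Proof.
  intros Ha H. revert i. induction t; simpl; intros i Hi; auto. apply Fo_mono; auto.
Qed.

Lemma Fit_scal a t y c i : 0 <= c -> (i < n)%nat -> Fit a t (fun j => c * y j) i = c * Fit a t y i.
Proof.
  intros Hc. revert i. induction t; simpl; intros i Hi; auto.
  rewrite <- Fo_scal by auto. apply Fo_ext. intros; auto.
Qed.

Lemma Fit_ascal a t y c i : 0 <= c -> (i < n)%nat -> Fit (fun s => c * a s) t y i = c ^ t * Fit a t y i.
Proof.
  intros Hc. revert i. induction t; simpl; intros i Hi; [ring|].
  rewrite (Fo_ext _ _ (fun j => c ^ t * Fit a t y j)) by auto.
  rewrite Fo_ascal, Fo_scal by (auto; apply pow_le; auto). ring.
Qed.

Lemma Fit_amono a b t y i : nonneg a -> (forall s, (s < n)%nat -> a s <= b s) ->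
  (forall j, (j < n)%nat -> 0 <= y j) -> (i < n)%nat -> Fit a t y i <= Fit b t y i.
Proof.
  intros Ha Hab Hy. revert i. induction t; simpl; intros i Hi; [lra|].
  apply Rle_trans with (Fo a (Fit b t y) i).
  - apply Fo_mono; auto.
  - apply Fo_amono; auto. intros; apply Fit_nonneg; auto.
Qed.

Lemma Fit_max a t y z i : nonneg a -> (forall j, (j < n)%nat -> 0 <= y j) -> (forall j, (j < n)%nat -> 0 <= z j) ->
  (i < n)%nat -> Fit a t (fun j => Rmax (y j) (z j)) i = Rmax (Fit a t y i) (Fit a t z i).
Proof.
  intros Ha Hy Hz. revert i. induction t; simpl; intros i Hi; auto.
  rewrite <- Fo_max by (auto; intros; apply Fit_nonneg; auto). apply Fo_ext. intros; auto.
Qed.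

Lemma Fit_shift a t y c i : (i < n)%nat ->
  Fit a t (fun j => y ((j + c) mod n)%nat) i = Fit a t y ((i + c) mod n)%nat.
Proof.
  revert i. induction t; simpl; intros i Hi; auto.
  rewrite <- Fo_shift by auto. apply Fo_ext. intros; auto.
Qed.

Lemma Fit_mpow a t x i : nonneg a -> (forall j, (j < n)%nat -> 0 <= x j) -> (i < n)%nat ->
  mvec n (mpow n (circ n a) t) x i = Fit a t x i.
Proof.
  intros Ha Hx. revert i. induction t; simpl; intros i Hi.
  - apply mvec_mid; auto.
  - rewrite mvec_assoc; auto.
    + unfold Fo. unfold mvec at 1. unfold mvec at 2. apply mmax_ext. intros j Hj. f_equal. apply IHt; auto.
    + intros; apply circ_nonneg; auto.
    + clear IHt. induction t; simpl; intros p q Hp Hq.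
      * unfold mid. destruct (Nat.eqb p q); lra.
      * unfold mmul. apply mmax_ge0.
Qed.

End Circ.
Lemma php (f : nat -> nat) N : (forall r, (r <= N)%nat -> (f r < N)%nat) ->
  exists p q, (p < q <= N)%nat /\ f p = f q.
Proof.
  revert f. induction N; intros f Hf.
  - specialize (Hf 0%nat (le_n 0)). lia.
  - destruct (Classical_Prop.classic (exists r, (r <= N)%nat /\ f r = f (S N))) as [[r [Hr E]]|Hno].
    + exists r, (S N). split; [lia|auto].
    + set (v := f (S N)).
      set (g := fun r => if Nat.ltb v (f r) then (f r - 1)%nat else f r).
      destruct (IHN g) as [p [q [Hpq E]]].
      * intros r Hr. unfold g. assert (f r <> v) by (intro; apply Hno; exists r; auto).
        assert (Hfr := Hf r ltac:(lia)). assert (v < S N)%nat by (apply Hf; lia).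
        destruct (Nat.ltb_spec v (f r)); lia.
      * exists p, q. split; [lia|]. unfold g in E.
        assert (f p <> v) by (intro; apply Hno; exists p; split; auto; lia).
        assert (f q <> v) by (intro; apply Hno; exists q; split; auto; lia).
        destruct (Nat.ltb_spec v (f p)), (Nat.ltb_spec v (f q)); lia.
Qed.

Section Paths.
Variable n : nat.
Hypothesis Hn : (0 < n)%nat.

Fixpoint wt (a : nat -> R) (l : list nat) : R :=
  match l with [] => 1 | s :: l => a s * wt a l end.
Fixpoint sm (l : list nat) : nat :=
  match l with [] => 0%nat | s :: l => (s + sm l)%nat end.

Lemma wt_app a l1 l2 : wt a (l1 ++ l2) = wt a l1 * wt a l2.
Proof. induction l1; simpl; [ring|]. rewrite IHl1; ring. Qed.
Lemma sm_app l1 l2 : sm (l1 ++ l2) = (sm l1 + sm l2)%nat.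
Proof. induction l1; simpl; auto. rewrite IHl1; lia. Qed.
Lemma wt_nonneg a l : nonneg n a -> (forall s, In s l -> (s < n)%nat) -> 0 <= wt a l.
Proof.
  induction l; simpl; intros Ha Hl; [lra|]. apply Rmult_le_pos; auto.
Qed.
Lemma wt_le a l M : nonneg n a -> (forall s, In s l -> (s < n)%nat) -> (forall s, (s < n)%nat -> a s <= M) ->
  wt a l <= M ^ length l.
Proof.
  induction l; simpl; intros Ha Hl HM; [lra|].
  apply Rmult_le_compat; auto. apply wt_nonneg; auto.
Qed.
Lemma wt_repeat a k r : wt a (repeat k r) = a k ^ r.
Proof. induction r; simpl; auto. rewrite IHr; auto. Qed.
Lemma sm_repeat k r : sm (repeat k r) = (r * k)%nat.
Proof. induction r; simpl; auto. Qed.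

Lemma path_ge a y l i : nonneg n a -> (forall j, (j < n)%nat -> 0 <= y j) -> (i < n)%nat ->
  (forall s, In s l -> (s < n)%nat) ->
  wt a l * y ((i + sm l) mod n)%nat <= Fit n a (length l) y i.
Proof.
  intros Ha Hy. revert i. induction l as [|s l IH]; simpl; intros i Hi Hl.
  - rewrite Nat.add_0_r, Nat.mod_small by auto. lra.
  - assert (Hs : (s < n)%nat) by auto.
    apply Rle_trans with (a s * Fit n a (length l) y ((i + s) mod n)%nat).
    + rewrite Rmult_assoc. apply Rmult_le_compat_l; auto.
      replace ((i + (s + sm l)) mod n)%nat with ((((i + s) mod n) + sm l) mod n)%nat.
      * apply IH; auto. apply mod_lt; auto.
      * rewrite Nat.Div0.add_mod_idemp_l. f_equal. lia.
    + apply Fo_ge; auto. intros; apply Fit_nonneg; auto.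
Qed.

Lemma path_ex a y t i : nonneg n a -> (forall j, (j < n)%nat -> 0 <= y j) -> (i < n)%nat ->
  exists l, length l = t /\ (forall s, In s l -> (s < n)%nat) /\
    Fit n a t y i = wt a l * y ((i + sm l) mod n)%nat.
Proof.
  intros Ha Hy. revert i. induction t; intros i Hi.
  - exists []. simpl. repeat split; auto. intros; tauto. rewrite Nat.add_0_r, Nat.mod_small by auto. ring.
  - simpl. rewrite Fo_reindex by auto.
    destruct (mmax_ex n (fun s => a s * Fit n a t y ((i + s) mod n)%nat)) as [s [Hs E]]; auto.
    { intros. apply Rmult_le_pos; auto. apply Fit_nonneg; auto. apply mod_lt; auto. }
    rewrite E. destruct (IHt ((i + s) mod n)%nat) as [l [Hl1 [Hl2 Hl3]]]; [apply mod_lt; auto|].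
    exists (s :: l). simpl. repeat split; auto.
    + intros s' [<-|H]; auto.
    + rewrite Hl3, Rmult_assoc. f_equal. f_equal. f_equal.
      rewrite Nat.Div0.add_mod_idemp_l. f_equal. lia.
Qed.

Lemma stab a y k i : nonneg n a -> (forall j, (j < n)%nat -> 0 <= y j) -> (k < n)%nat ->
  (forall s, (s < n)%nat -> a s <= a k) -> (i < n)%nat ->
  Fit n a n y i <= a k * Fit n a (n - 1) y ((i + k) mod n)%nat.
Proof.
  intros Ha Hy Hk Hmax Hi.
  destruct (path_ex a y n i) as [l [Hl1 [Hl2 Hl3]]]; auto. rewrite Hl3.
  set (ps := fun r => ((sm (firstn r l) + r * (n - k)) mod n)%nat).
  destruct (php ps n) as [p [q [Hpq E]]].
  { intros. apply mod_lt; auto. }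
  set (l1 := firstn p l). set (l2 := firstn (q - p) (skipn p l)). set (l3 := skipn q l).
  assert (Hsplit : l = l1 ++ l2 ++ l3).
  { unfold l1, l3. rewrite <- (firstn_skipn p l) at 1. f_equal.
    replace q with ((q - p) + p)%nat by lia. rewrite <- skipn_skipn.
    unfold l2. symmetry. apply firstn_skipn. }
  assert (Len1 : length l1 = p) by (unfold l1; rewrite firstn_length; lia).
  assert (Len2 : length l2 = (q - p)%nat) by (unfold l2; rewrite firstn_length, skipn_length; lia).
  assert (Len3 : length l3 = (n - q)%nat) by (unfold l3; rewrite skipn_length; lia).
  assert (Hq : firstn q l = l1 ++ l2).
  { rewrite Hsplit. replace q with (length l1 + length l2)%nat by lia. rewrite firstn_app_2. f_equal.
    replace (length l2) with (length l2 + 0)%nat by lia. rewrite firstn_app_2. simpl. apply app_nil_r. }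
  assert (Hin : forall s, In s l1 \/ In s l2 \/ In s l3 -> (s < n)%nat).
  { intros s Hs. apply Hl2. rewrite Hsplit. apply in_or_app. destruct Hs as [H|[H|H]]; auto.
    right; apply in_or_app; auto. right; apply in_or_app; auto. }
  set (L := l1 ++ l3 ++ repeat k (q - p - 1)).
  assert (LenL : length L = (n - 1)%nat).
  { unfold L. rewrite !app_length, repeat_length. lia. }
  assert (HinL : forall s, In s L -> (s < n)%nat).
  { unfold L. intros s Hs. apply in_app_or in Hs. destruct Hs as [H|H]; [apply Hin; auto|].
    apply in_app_or in H. destruct H as [H|H]; [apply Hin; auto|]. apply repeat_spec in H. rewrite H; auto. }
  assert (Wt : wt a l <= a k * wt a L).
  { rewrite Hsplit. unfold L. rewrite !wt_app, wt_repeat.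
    assert (wt a l2 <= a k ^ (q - p)) by (rewrite <- Len2; apply wt_le; auto).
    replace (q - p)%nat with (S (q - p - 1)) in H by lia. simpl in H.
    assert (0 <= wt a l1) by (apply wt_nonneg; auto).
    assert (0 <= wt a l3) by (apply wt_nonneg; auto).
    apply Rle_trans with (wt a l1 * ((a k * a k ^ (q - p - 1)) * wt a l3)).
    - apply Rmult_le_compat_l; auto. apply Rmult_le_compat_r; auto.
    - right; ring. }
  assert (End : ((i + sm l) mod n)%nat = (((i + k) mod n + sm L) mod n)%nat).
  { rewrite Nat.Div0.add_mod_idemp_l. unfold ps in E. rewrite Hq in E.
    rewrite Hsplit. unfold L. rewrite !sm_app, sm_repeat. rewrite sm_app in E. fold l1 in E.
    set (S1 := sm l1) in *. set (S2 := sm l2) in *. set (S3 := sm l3) in *.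
    assert (E2 : ((S1 + p * (n - k) + (i + S3 + q * k)) mod n)%nat =
                 ((S1 + S2 + q * (n - k) + (i + S3 + q * k)) mod n)%nat).
    { rewrite <- (Nat.Div0.add_mod_idemp_l (S1 + p * (n - k))), E. rewrite Nat.Div0.add_mod_idemp_l. auto. }
    replace (S1 + p * (n - k) + (i + S3 + q * k))%nat with ((i + k + (S1 + (S3 + (q - p - 1) * k))) + p * n)%nat in E2 by nia.
    replace (S1 + S2 + q * (n - k) + (i + S3 + q * k))%nat with ((i + (S1 + (S2 + S3))) + q * n)%nat in E2 by nia.
    rewrite !Nat.Div0.mod_add in E2. auto. }
  rewrite End.
  apply Rle_trans with (a k * wt a L * y (((i + k) mod n + sm L) mod n)%nat).
  - apply Rmult_le_compat_r; [apply Hy, mod_lt; auto| auto].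
  - rewrite Rmult_assoc. apply Rmult_le_compat_l; [apply Ha; auto|].
    rewrite <- LenL. apply path_ge; auto. apply mod_lt; auto.
Qed.

End Paths.
Section Char.
Variable n : nat.
Hypothesis Hn : (0 < n)%nat.
Variable a : nat -> R.
Hypothesis Ha : nonneg n a.
Variable k : nat.
Hypothesis Hk : (k < n)%nat.
Hypothesis Hmax : forall s, (s < n)%nat -> a s <= a k.
Let m := a k.

Lemma sig_comp i r s : (((i + r * k) mod n + s * k) mod n = (i + (r + s) * k) mod n)%nat.
Proof. rewrite Nat.Div0.add_mod_idemp_l. f_equal. nia. Qed.

Lemma sig_mul i c j : ((i + (c * n + j) * k) mod n = (i + j * k) mod n)%nat.
Proof. replace (i + (c * n + j) * k)%nat with (i + j * k + (c * k) * n)%nat by nia. apply Nat.Div0.mod_add. Qed.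

Lemma sig0 i : (i < n)%nat -> ((i + 0 * k) mod n = i)%nat.
Proof. intros; rewrite Nat.add_0_r; apply Nat.mod_small; auto. Qed.

Lemma D1 y t i : (forall j, (j < n)%nat -> 0 <= y j) -> (i < n)%nat ->
  m ^ t * y ((i + t * k) mod n)%nat <= Fit n a t y i.
Proof.
  intros Hy. revert i. induction t; simpl; intros i Hi.
  - rewrite sig0 by auto. lra.
  - apply Rle_trans with (m * Fit n a t y ((i + k) mod n)%nat).
    + rewrite Rmult_assoc. apply Rmult_le_compat_l; [apply Ha; auto|].
      replace ((i + k) mod n)%nat with ((i + 1 * k) mod n)%nat by (f_equal; lia).
      replace ((i + (k + t * k)) mod n)%nat with (((i + 1 * k) mod n + t * k) mod n)%nat.
      * apply IHt. apply mod_lt; auto.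
      * rewrite sig_comp. auto.
    + apply Fo_ge; auto. intros; apply Fit_nonneg; auto.
Qed.

Lemma D2 y t i : (forall j, (j < n)%nat -> 0 <= y j) -> (n - 1 <= t)%nat -> (i < n)%nat ->
  Fit n a (S t) y i = m * Fit n a t y ((i + k) mod n)%nat.
Proof.
  intros Hy Ht Hi. apply Rle_antisym.
  - replace (S t) with (n + (t - (n - 1)))%nat by lia. rewrite Fit_add.
    replace t with ((n - 1) + (t - (n - 1)))%nat at 2 by lia. rewrite Fit_add.
    apply stab; auto. intros; apply Fit_nonneg; auto.
  - simpl. apply Fo_ge; auto. intros; apply Fit_nonneg; auto.
Qed.

Lemma D2iter y t r i : (forall j, (j < n)%nat -> 0 <= y j) -> (n - 1 <= t)%nat -> (i < n)%nat ->
  Fit n a (r + t) y i = m ^ r * Fit n a t y ((i + r * k) mod n)%nat.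
Proof.
  intros Hy Ht. revert i. induction r; intros i Hi.
  - simpl. rewrite sig0 by auto. ring.
  - replace (S r + t)%nat with (S (r + t)) by lia.
    rewrite D2 by (auto; lia). rewrite IHr by (apply mod_lt; auto).
    replace (((i + k) mod n + r * k) mod n)%nat with ((i + S r * k) mod n)%nat
      by (rewrite Nat.Div0.add_mod_idemp_l; f_equal; lia).
    change (m ^ S r) with (m * m ^ r). ring.
Qed.

Definition eqt (x : vec) t := forall i, (i < n)%nat -> Fit n a (S t) x i = m * Fit n a t x i.
Definition Qc (x : vec) := forall i j, (i < n)%nat -> m ^ (n - 1) * x ((i + j * k) mod n)%nat <= Fit n a (n - 1) x i.

Lemma eq_fwd x t : eqt x t -> eqt x (S t).
Proof.
  intros H i Hi. change (Fo n a (Fit n a (S t) x) i = m * Fo n a (Fit n a t x) i).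
  rewrite <- Fo_scal by (apply Ha; auto). apply Fo_ext. intros; auto.
Qed.

Lemma eq_fwd' x t s : eqt x t -> (t <= s)%nat -> eqt x s.
Proof.
  intros H Hts. induction Hts; auto. apply eq_fwd; auto.
Qed.

Lemma AQ x t0 : 0 < m -> (forall j, (j < n)%nat -> 0 <= x j) -> eqt x t0 -> Qc x.
Proof.
  intros Hm Hx H0.
  set (s := (t0 + n)%nat). set (r := S t0).
  assert (Hs : eqt x s) by (apply (eq_fwd' x t0); auto; unfold s; lia).
  assert (Pinv : forall i, (i < n)%nat -> Fit n a s x ((i + 1 * k) mod n)%nat = Fit n a s x i).
  { intros i Hi. apply Rmult_eq_reg_l with m; [|lra].
    rewrite <- (Hs i Hi). rewrite D2 by (auto; unfold s; lia). do 3 f_equal. lia. }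
  assert (Pc : forall c i, (i < n)%nat -> Fit n a s x ((i + c * k) mod n)%nat = Fit n a s x i).
  { induction c; intros i Hi. rewrite sig0; auto.
    replace (i + S c * k)%nat with ((i + c * k) + 1 * k)%nat by lia.
    rewrite <- Nat.Div0.add_mod_idemp_l. rewrite Pinv by (apply mod_lt; auto). auto. }
  intros i j Hi.
  assert (E1 : Fit n a s x ((i + ((n - 1) * r) * k) mod n)%nat = m ^ r * Fit n a (n - 1) x i).
  { replace s with (r + (n - 1))%nat by (unfold s, r; lia).
    rewrite D2iter by (auto; try lia; apply mod_lt; auto).
    rewrite sig_comp. f_equal. f_equal. replace ((n - 1) * r + r)%nat with (r * n + 0)%nat by nia.
    rewrite sig_mul. apply sig0; auto. }
  rewrite Pc in E1 by auto.
  assert (E2 : m ^ s * x ((i + j * k) mod n)%nat <= Fit n a s x i).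
  { rewrite <- (Pc ((n - 1) * s + j)%nat) by auto.
    eapply Rle_trans; [|apply D1; auto; apply mod_lt; auto].
    right. f_equal. f_equal. rewrite sig_comp. replace ((n - 1) * s + j + s)%nat with (s * n + j)%nat by nia.
    rewrite sig_mul. auto. }
  rewrite E1 in E2. replace s with (r + (n - 1))%nat in E2 by (unfold s, r; lia).
  rewrite pow_add, Rmult_assoc in E2.
  apply Rmult_le_reg_l with (m ^ r); auto. apply pow_lt; auto.
Qed.

Lemma QA x : 0 < m -> (forall j, (j < n)%nat -> 0 <= x j) -> Qc x -> forall t, (n - 1 <= t)%nat -> eqt x t.
Proof.
  intros Hm Hx HQ.
  set (w := Fit n a (n - 1) x).
  assert (Hw : forall j, (j < n)%nat -> 0 <= w j) by (intros; apply Fit_nonneg; auto).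
  assert (H : forall i j, (i < n)%nat -> w ((i + j * k) mod n)%nat <= w ((i + (n - 1) * k) mod n)%nat).
  { intros i j Hi. apply Rmult_le_reg_l with (m ^ (n - 1)); [apply pow_lt; auto|].
    unfold w. rewrite <- (D2iter x (n - 1) (n - 1) i) by (auto; lia). rewrite Fit_add.
    rewrite <- Fit_shift by auto. rewrite <- Fit_scal by (auto; apply pow_le; lra).
    apply Fit_mono; auto. }
  assert (Pinv : forall i, (i < n)%nat -> w ((i + 1 * k) mod n)%nat = w i).
  { intros i Hi. apply Rle_antisym.
    - specialize (H ((i + 1 * k) mod n)%nat 0%nat (mod_lt _ Hn _)).
      rewrite !sig_comp in H. replace (1 + 0)%nat with 1%nat in H by lia.
      replace (1 + (n - 1))%nat with (1 * n + 0)%nat in H by lia. rewrite sig_mul, sig0 in H by auto. auto.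
    - specialize (H ((i + 2 * k) mod n)%nat (2 * n - 2)%nat (mod_lt _ Hn _)).
      rewrite !sig_comp in H. replace (2 + (2 * n - 2))%nat with (2 * n + 0)%nat in H by lia.
      replace (2 + (n - 1))%nat with (1 * n + 1)%nat in H by lia. rewrite !sig_mul, sig0 in H by auto. auto. }
  assert (Pt : forall t, (n - 1 <= t)%nat -> forall i, (i < n)%nat -> Fit n a t x ((i + 1 * k) mod n)%nat = Fit n a t x i).
  { intros t Ht. induction Ht; auto.
    intros i Hi. replace (i + 1 * k)%nat with (i + k)%nat by lia.
    rewrite !D2 by (auto; try lia; apply mod_lt; auto). f_equal.
    pose proof (IHHt ((i + k) mod n)%nat (mod_lt _ Hn _)) as E.
    replace ((((i + k) mod n) + 1 * k) mod n)%nat with ((((i + k) mod n) + k) mod n)%nat in E by (f_equal; lia).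
    exact E. }
  intros t Ht i Hi. rewrite D2 by auto. f_equal. rewrite <- (Pt t Ht i Hi). rewrite Nat.mul_1_l; auto.
Qed.

End Char.
Lemma seqs_len n L l : In l (seqs n L) -> length l = L.
Proof.
  revert l. induction L; simpl; intros l H.
  - destruct H as [<-|[]]; auto.
  - apply in_flat_map in H. destruct H as [s [Hs H]]. apply in_map_iff in H.
    destruct H as [i [<- _]]. simpl. f_equal. auto.
Qed.

Lemma seqs_in n L l : length l = L -> (forall x, In x l -> (x < n)%nat) -> In l (seqs n L).
Proof.
  revert l. induction L; simpl; intros l Hl Hx.
  - destruct l; [auto|discriminate].
  - destruct l as [|x l]; [discriminate|]. apply in_flat_map. exists l. split.
    + apply IHL; auto. intros; apply Hx; simpl; auto.
    + apply in_map_iff. exists x. split; auto. apply in_seq. split; [lia|]. simpl. apply Hx; simpl; auto.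
Qed.

Lemma fold_max_le (L : list R) M : 0 <= M -> (forall v, In v L -> v <= M) -> fold_right Rmax 0 L <= M.
Proof.
  induction L; simpl; intros HM H; auto. apply Rmax_lub; auto.
Qed.

Lemma fold_max_ge (L : list R) v : In v L -> v <= fold_right Rmax 0 L.
Proof.
  induction L; simpl; intros H; [tauto|]. destruct H as [<-|H]; [apply Rmax_l|].
  eapply Rle_trans; [apply IHL; auto|apply Rmax_r].
Qed.

Lemma cw_bound (A : mat) M f l : (forall i j, 0 <= A i j <= M) -> l <> [] ->
  0 <= cw_aux A f l <= M ^ length l.
Proof.
  intros HA. induction l as [|x t IH]; intros Hl; [congruence|].
  destruct t as [|y t].
  - simpl. rewrite Rmult_1_r. auto.
  - change (cw_aux A f (x :: y :: t)) with (A x y * cw_aux A f (y :: t)).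
    specialize (IH ltac:(discriminate)). destruct (HA x y). destruct IH as [IH1 IH2].
    change (length (x :: y :: t)) with (S (length (y :: t))).
    change (M ^ S (length (y :: t))) with (M * M ^ (length (y :: t))).
    split; [apply Rmult_le_pos; lra|]. apply Rmult_le_compat; lra.
Qed.

Lemma gmean_le w L M : (1 <= L)%nat -> 0 <= w <= M ^ L -> 0 <= M -> gmean w L <= M.
Proof.
  intros HL Hw HM. unfold gmean. destruct (Rle_dec w 0); auto.
  assert (HMp : 0 < M).
  { destruct HM as [HM|HM]; auto. subst. rewrite pow_i in Hw by lia. lra. }
  apply Rle_trans with (Rpower (M ^ L) (/ INR L)).
  - apply Rle_Rpower_l; [left; apply Rinv_0_lt_compat, lt_0_INR; lia|lra].
  - rewrite <- Rpower_pow by auto. rewrite Rpower_mult, Rinv_r, Rpower_1 by (auto; apply not_0_INR; lia). lra.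
Qed.

Lemma gmean_pow M L : (1 <= L)%nat -> 0 <= M -> gmean (M ^ L) L = M.
Proof.
  intros HL HM. unfold gmean. destruct (Rle_dec (M ^ L) 0).
  - destruct HM as [HM|HM]; auto. assert (0 < M ^ L) by (apply pow_lt; auto). lra.
  - assert (HMp : 0 < M).
    { destruct HM as [HM|HM]; auto. subst. rewrite pow_i in n by lia. lra. }
    rewrite <- Rpower_pow by auto. rewrite Rpower_mult, Rinv_r, Rpower_1 by (auto; apply not_0_INR; lia). auto.
Qed.

Section Lam.
Variable n : nat.
Hypothesis Hn : (0 < n)%nat.
Variable a : nat -> R.
Hypothesis Ha : nonneg n a.
Variable k : nat.
Hypothesis Hk : (k < n)%nat.

Let g j := ((j * k) mod n)%nat.

Lemma circ_step j : circ n a (g j) (g (S j)) = a k.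
Proof.
  unfold circ, g. f_equal. set (u := ((j * k) mod n)%nat).
  assert (Hu : (u < n)%nat) by apply mod_lt, Hn.
  replace (S j * k)%nat with (j * k + k)%nat by lia.
  rewrite <- Nat.Div0.add_mod_idemp_l. fold u. rewrite (mod2 n (u + k)) by lia.
  destruct (Nat.ltb_spec (u + k) n).
  - replace (u + k + n - u)%nat with (k + 1 * n)%nat by lia. rewrite Nat.Div0.mod_add. apply Nat.mod_small; auto.
  - replace (u + k - n + n - u)%nat with k by lia. apply Nat.mod_small; auto.
Qed.

Lemma circ_close : circ n a (g (n - 1)) 0%nat = a k.
Proof.
  unfold circ, g. f_equal. set (c := (((n - 1) * k) mod n)%nat).
  assert (Hc : (c < n)%nat) by apply mod_lt, Hn.
  assert (H0 : ((c + k) mod n = 0)%nat).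
  { unfold c. rewrite Nat.Div0.add_mod_idemp_l. replace ((n - 1) * k + k)%nat with (k * n)%nat by nia.
    apply Nat.Div0.mod_mul. }
  rewrite (mod2 n (c + k)) in H0 by lia. destruct (Nat.ltb_spec (c + k) n).
  - replace c with 0%nat by lia. replace k with 0%nat by lia. rewrite Nat.add_0_l, Nat.sub_0_r, Nat.Div0.mod_same. auto.
  - replace (0 + n - c)%nat with k by lia. apply Nat.mod_small; auto.
Qed.

Lemma cw_cycle L r : cw_aux (circ n a) 0%nat (map g (seq r (S L))) = a k ^ L * circ n a (g (r + L)%nat) 0%nat.
Proof.
  revert r. induction L; intros r.
  - simpl. rewrite Nat.add_0_r. ring.
  - change (map g (seq r (S (S L)))) with (g r :: map g (seq (S r) (S L))).
    change (map g (seq (S r) (S L))) with (g (S r) :: map g (seq (S (S r)) L)).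
    change (cw_aux (circ n a) 0%nat (g r :: g (S r) :: map g (seq (S (S r)) L)))
      with (circ n a (g r) (g (S r)) * cw_aux (circ n a) 0%nat (g (S r) :: map g (seq (S (S r)) L))).
    change (g (S r) :: map g (seq (S (S r)) L)) with (map g (seq (S r) (S L))).
    rewrite IHL, circ_step. replace (S r + L)%nat with (r + S L)%nat by lia. simpl. ring.
Qed.

End Lam.

Lemma lam_circ n a : (0 < n)%nat -> nonneg n a -> lam n (circ n a) = mmax n a.
Proof.
  intros Hn Ha. set (M := mmax n a).
  assert (HM : 0 <= M) by apply mmax_ge0.
  assert (HA : forall i j, 0 <= circ n a i j <= M).
  { intros. unfold circ. split; [apply Ha, mod_lt, Hn|]. apply mmax_ge, mod_lt, Hn. }
  unfold lam. apply Rle_antisym.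
  - apply fold_max_le; auto. intros v Hv. apply in_map_iff in Hv. destruct Hv as [l [<- Hl]].
    apply in_flat_map in Hl. destruct Hl as [L [HL Hl]]. apply in_seq in HL.
    apply seqs_len in Hl. destruct l as [|x l]; [simpl in Hl; lia|].
    apply gmean_le; auto; [lia|]. unfold cycle_weight. apply cw_bound; auto. discriminate.
  - destruct (mmax_ex n a) as [k [Hk E]]; auto. fold M in E. rewrite E.
    apply fold_max_ge. apply in_map_iff.
    exists (map (fun j => ((j * k) mod n)%nat) (seq 0 n)). split.
    + rewrite length_map, length_seq.
      destruct n as [|n']; [lia|].
      assert (Hcw : cycle_weight (circ (S n') a) (map (fun j => ((j * k) mod S n')%nat) (seq 0 (S n'))) = a k ^ S n').
      { change (map (fun j => ((j * k) mod S n')%nat) (seq 0 (S n'))) with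
          (((0 * k) mod S n')%nat :: map (fun j => ((j * k) mod S n')%nat) (seq 1 n')).
        unfold cycle_weight.
        change (((0 * k) mod S n')%nat :: map (fun j => ((j * k) mod S n')%nat) (seq 1 n')) with
          (map (fun j => ((j * k) mod S n')%nat) (seq 0 (S n'))).
        replace ((0 * k) mod S n')%nat with 0%nat by (rewrite Nat.mul_0_l, Nat.Div0.mod_0_l; auto).
        rewrite (cw_cycle (S n') Hn a k Hk n' 0). simpl (0 + n')%nat.
        pose proof (circ_close (S n') Hn a k Hk) as HC. replace (S n' - 1)%nat with n' in HC by lia. rewrite HC.
        simpl. ring. }
      rewrite Hcw.
      apply gmean_pow; [lia|]. apply Ha; auto.
    + apply in_flat_map. exists n. split; [apply in_seq; lia|].
      apply seqs_in; [rewrite length_map, length_seq; auto|].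
      intros x Hx. apply in_map_iff in Hx. destruct Hx as [j [<- _]]. apply mod_lt, Hn.
Qed.
Definition cl (e u v : R) := u <= v + e /\ v <= u + e.

Lemma le_eps u v : (forall e, 0 < e -> u <= v + e) -> u <= v.
Proof.
  intros H. destruct (Rle_dec u v); auto. specialize (H ((u - v) / 2) ltac:(lra)). lra.
Qed.

Section Cont.
Variable n : nat.
Hypothesis Hn : (0 < n)%nat.

Lemma circ_le_mmax a i j : circ n a i j <= mmax n a.
Proof. unfold circ. apply mmax_ge, mod_lt, Hn. Qed.

Lemma C1 a y z e i : nonneg n a -> 0 <= e -> (forall j, (j < n)%nat -> 0 <= y j) ->
  (forall j, (j < n)%nat -> y j <= z j + e) -> Fo n a y i <= Fo n a z i + mmax n a * e.
Proof.
  intros Ha He Hy H. unfold Fo, mvec. apply mmax_le.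
  - apply Rplus_le_le_0_compat; [apply mmax_ge0|apply Rmult_le_pos; auto; apply mmax_ge0].
  - intros j Hj. assert (0 <= circ n a i j) by (apply circ_nonneg; auto).
    assert (circ n a i j <= mmax n a) by apply circ_le_mmax.
    apply Rle_trans with (circ n a i j * z j + circ n a i j * e).
    + rewrite <- Rmult_plus_distr_l. apply Rmult_le_compat_l; auto.
    + apply Rplus_le_compat.
      * apply (mmax_ge n (fun j0 => circ n a i j0 * z j0)); auto.
      * apply Rmult_le_compat_r; auto.
Qed.

Lemma C2 a b y d Y i : nonneg n a -> 0 <= d -> (forall s, (s < n)%nat -> a s <= b s + d) ->
  (forall j, (j < n)%nat -> 0 <= y j <= Y) -> Fo n a y i <= Fo n b y i + d * Y.
Proof.
  intros Ha Hd H Hy. unfold Fo, mvec. apply mmax_le.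
  - apply Rplus_le_le_0_compat; [apply mmax_ge0|]. apply Rmult_le_pos; auto.
    destruct (Hy 0%nat Hn); lra.
  - intros j Hj. destruct (Hy j Hj).
    assert (circ n a i j <= circ n b i j + d) by (unfold circ; apply H, mod_lt, Hn).
    apply Rle_trans with (circ n b i j * y j + d * y j).
    + rewrite <- Rmult_plus_distr_r. apply Rmult_le_compat_r; auto.
    + apply Rplus_le_compat.
      * apply (mmax_ge n (fun j0 => circ n b i j0 * y j0)); auto.
      * apply Rmult_le_compat_l; auto.
Qed.

Lemma C3 a y Y i : nonneg n a -> (forall j, (j < n)%nat -> y j <= Y) -> 0 <= Y -> Fo n a y i <= mmax n a * Y.
Proof.
  intros Ha H HY. unfold Fo, mvec. apply mmax_le; [apply Rmult_le_pos; auto; apply mmax_ge0|].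
  intros j Hj. destruct (Rle_dec 0 (y j)).
  - apply Rmult_le_compat; auto. apply circ_nonneg; auto. apply circ_le_mmax.
  - apply Rle_trans with 0; [|apply Rmult_le_pos; auto; apply mmax_ge0].
    assert (0 <= circ n a i j) by (apply circ_nonneg; auto). nra.
Qed.

Lemma I1 a t y Y i : nonneg n a -> (forall j, (j < n)%nat -> y j <= Y) -> 0 <= Y -> (i < n)%nat ->
  Fit n a t y i <= mmax n a ^ t * Y.
Proof.
  intros Ha H HY. revert i. induction t; simpl; intros i Hi; [rewrite Rmult_1_l; auto|].
  rewrite Rmult_assoc. apply C3; auto. apply Rmult_le_pos; auto. apply pow_le, mmax_ge0.
Qed.

Lemma I3 b t y z e i : nonneg n b -> 0 <= e -> (forall j, (j < n)%nat -> 0 <= y j) -> (forall j, (j < n)%nat -> 0 <= z j) ->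
  (forall j, (j < n)%nat -> cl e (y j) (z j)) -> (i < n)%nat ->
  cl (mmax n b ^ t * e) (Fit n b t y i) (Fit n b t z i).
Proof.
  intros Hb He Hy Hz H. revert i. induction t; simpl; intros i Hi.
  - rewrite Rmult_1_l; auto.
  - assert (0 <= mmax n b) by apply mmax_ge0.
    rewrite Rmult_assoc. split.
    + apply C1; auto. apply Rmult_le_pos; auto; apply pow_le; auto.
      intros; apply Fit_nonneg; auto. intros j Hj; apply IHt; auto.
    + apply C1; auto. apply Rmult_le_pos; auto; apply pow_le; auto.
      intros; apply Fit_nonneg; auto. intros j Hj; apply IHt; auto.
Qed.

Lemma mmax_close a b d : (forall s, (s < n)%nat -> a s <= b s + d) -> 0 <= d -> mmax n a <= mmax n b + d.
Proof.
  intros H Hd. apply mmax_le. apply Rplus_le_le_0_compat; auto; apply mmax_ge0.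
  intros s Hs. apply Rle_trans with (b s + d); auto. apply Rplus_le_compat_r, mmax_ge; auto.
Qed.

Lemma I2 b B t : nonneg n b -> 0 <= B -> exists C, 0 <= C /\
  forall a d x i, nonneg n a -> 0 <= d <= 1 -> (forall s, (s < n)%nat -> cl d (a s) (b s)) ->
   (forall j, (j < n)%nat -> 0 <= x j <= B) -> (i < n)%nat ->
   cl (C * d) (Fit n a t x i) (Fit n b t x i).
Proof.
  intros Hb HB. set (K := mmax n b + 1).
  assert (HK : 0 <= K) by (unfold K; pose proof (mmax_ge0 n b); lra).
  induction t.
  - exists 0. split; [lra|]. intros. simpl. unfold cl. lra.
  - destruct IHt as [C [HC IH]]. exists (K * C + K ^ t * B). split.
    { apply Rplus_le_le_0_compat; apply Rmult_le_pos; auto. apply pow_le; auto. }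
    intros a d x i Ha Hd Hab Hx Hi. simpl.
    assert (HMa : mmax n a <= K).
    { unfold K. apply Rle_trans with (mmax n b + d); [apply mmax_close; auto; [intros; apply Hab; auto|lra]|lra]. }
    assert (HMb : mmax n b <= K) by (unfold K; lra).
    assert (Hxb : forall j, (j < n)%nat -> x j <= B) by (intros; apply Hx; auto).
    assert (Hx0 : forall j, (j < n)%nat -> 0 <= x j) by (intros; apply Hx; auto).
    assert (Bya : forall j, (j < n)%nat -> 0 <= Fit n a t x j <= K ^ t * B).
    { intros j Hj. split; [apply Fit_nonneg; auto|]. eapply Rle_trans; [apply I1; eauto|].
      apply Rmult_le_compat_r; auto. apply pow_incr. split; auto; apply mmax_ge0. }
    assert (Byb : forall j, (j < n)%nat -> 0 <= Fit n b t x j <= K ^ t * B).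
    { intros j Hj. split; [apply Fit_nonneg; auto|]. eapply Rle_trans; [apply I1; eauto|].
      apply Rmult_le_compat_r; auto. apply pow_incr. split; auto; apply mmax_ge0. }
    assert (HCd : 0 <= C * d) by (apply Rmult_le_pos; lra).
    assert (HKtB : 0 <= K ^ t * B) by (apply Rmult_le_pos; auto; apply pow_le; auto).
    split.
    + eapply Rle_trans; [apply (C2 a b _ d (K ^ t * B)); auto; [lra|intros; apply Hab; auto]|].
      eapply Rle_trans; [apply Rplus_le_compat_r, (C1 b _ (Fit n b t x) (C * d)); auto; [intros; apply Fit_nonneg; auto|intros; apply IH; auto]|].
      assert (mmax n b * (C * d) <= K * (C * d)) by (apply Rmult_le_compat_r; auto).
      assert (d * (K ^ t * B) <= 1 * (K ^ t * B)) by (apply Rmult_le_compat_r; lra). nra.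
    + eapply Rle_trans; [apply (C2 b a _ d (K ^ t * B)); auto; [lra|intros; apply Hab; auto]|].
      eapply Rle_trans; [apply Rplus_le_compat_r, (C1 a _ (Fit n a t x) (C * d)); auto; [intros; apply Fit_nonneg; auto|intros; apply IH; auto]|].
      assert (mmax n a * (C * d) <= K * (C * d)) by (apply Rmult_le_compat_r; auto).
      assert (d * (K ^ t * B) <= 1 * (K ^ t * B)) by (apply Rmult_le_compat_r; lra). nra.
Qed.

End Cont.
Section Limit.
Variable n : nat.
Hypothesis Hn : (0 < n)%nat.
Variables xl xu : vec.
Hypothesis hX : forall i, (i < n)%nat -> 0 <= xl i <= xu i.
Variable b : nat -> R.
Hypothesis Hb : nonneg n b.
Variable N : nat.

Definition eqL (a : nat -> R) (x : vec) := forall i, (i < n)%nat -> Fit n a (S N) x i = mmax n a * Fit n a N x i.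

Hypothesis Happrox : forall d, 0 < d -> exists a x, nonneg n a /\ (forall s, (s < n)%nat -> cl d (a s) (b s)) /\
  inX n xl xu x /\ eqL a x.

Let Mb := mmax n b.
Definition T (eta : R) (x : vec) := inX n xl xu x /\ forall i, (i < n)%nat -> cl eta (Fit n b (S N) x i) (Mb * Fit n b N x i).

Let B := mmax n xu.
Lemma inX_bound x j : inX n xl xu x -> (j < n)%nat -> 0 <= x j <= B.
Proof.
  intros H Hj. destruct (H j Hj), (hX j Hj). split; [lra|]. apply Rle_trans with (xu j); auto.
  apply mmax_ge; auto.
Qed.

Lemma T1 eta : 0 < eta -> exists x, T eta x.
Proof.
  intros Heta. assert (HB : 0 <= B) by apply mmax_ge0.
  assert (HMb : 0 <= Mb) by apply mmax_ge0.
  destruct (I2 n Hn b B (S N) Hb HB) as [C1 [HC1 H1]].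
  destruct (I2 n Hn b B N Hb HB) as [C2 [HC2 H2]].
  set (K := Mb + 1).
  set (D := C1 + K ^ N * B + Mb * C2 + 1).
  assert (HK : 0 <= K) by (unfold K; lra).
  assert (HKB : 0 <= K ^ N * B) by (apply Rmult_le_pos; auto; apply pow_le; auto).
  assert (HD : 0 < D) by (unfold D; pose proof (Rmult_le_pos Mb C2 HMb HC2); lra).
  set (d := Rmin 1 (eta / D)).
  assert (Hd : 0 < d) by (apply Rmin_pos; [lra|apply Rdiv_lt_0_compat; auto]).
  assert (Hd1 : d <= 1) by apply Rmin_l.
  assert (HdD : d * D <= eta).
  { apply Rle_trans with (eta / D * D); [apply Rmult_le_compat_r; [lra|apply Rmin_r]|]. right; field; lra. }
  destruct (Happrox d Hd) as [a [x [Ha [Hab [HxX Heq]]]]].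
  exists x. split; auto. intros i Hi.
  assert (Hx : forall j, (j < n)%nat -> 0 <= x j <= B) by (intros; apply inX_bound; auto).
  destruct (H1 a d x i Ha ltac:(lra) Hab Hx Hi) as [E1 E2].
  destruct (H2 a d x i Ha ltac:(lra) Hab Hx Hi) as [E3 E4].
  rewrite (Heq i Hi) in E1, E2.
  assert (HMa1 : mmax n a <= Mb + d) by (apply mmax_close; auto; [intros; apply Hab; auto|lra]).
  assert (HMa2 : Mb <= mmax n a + d) by (apply mmax_close; auto; [intros; apply Hab; auto|lra]).
  assert (HMa : mmax n a <= K) by (unfold K; lra).
  assert (Fa : 0 <= Fit n a N x i <= K ^ N * B).
  { split; [apply Fit_nonneg; auto; intros; apply Hx; auto|]. eapply Rle_trans; [apply (I1 n Hn a N x B i Ha); auto; intros; apply Hx; auto|].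
    apply Rmult_le_compat_r; auto. apply pow_incr. split; auto; apply mmax_ge0. }
  assert (Fb : 0 <= Fit n b N x i) by (apply Fit_nonneg; auto; intros; apply Hx; auto).
  assert (0 <= mmax n a) by apply mmax_ge0.
  assert (HC1d : 0 <= C1 * d) by (apply Rmult_le_pos; lra).
  assert (HC2d : 0 <= C2 * d) by (apply Rmult_le_pos; lra).
  assert (P1 : mmax n a * Fit n a N x i <= Mb * Fit n b N x i + d * (K ^ N * B) + Mb * (C2 * d)).
  { assert (mmax n a * Fit n a N x i <= (Mb + d) * Fit n a N x i) by (apply Rmult_le_compat_r; lra).
    assert (Mb * Fit n a N x i <= Mb * (Fit n b N x i + C2 * d)) by (apply Rmult_le_compat_l; lra).
    assert (d * Fit n a N x i <= d * (K ^ N * B)) by (apply Rmult_le_compat_l; lra). nra. }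
  assert (P2 : Mb * Fit n b N x i <= mmax n a * Fit n a N x i + d * (K ^ N * B) + Mb * (C2 * d)).
  { assert (Mb * Fit n b N x i <= Mb * (Fit n a N x i + C2 * d)) by (apply Rmult_le_compat_l; lra).
    assert (Mb * Fit n a N x i <= (mmax n a + d) * Fit n a N x i) by (apply Rmult_le_compat_r; lra).
    assert (d * Fit n a N x i <= d * (K ^ N * B)) by (apply Rmult_le_compat_l; lra). nra. }
  assert (d * (C1 + K ^ N * B + Mb * C2) <= eta) by (unfold D in HdD; nra).
  unfold cl. split; nra.
Qed.

Lemma T2 eta x y : T eta x -> T eta y -> T eta (fun j => Rmax (x j) (y j)).
Proof.
  intros [Hx1 Hx2] [Hy1 Hy2]. split.
  - intros i Hi. destruct (Hx1 i Hi), (Hy1 i Hi). split.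
    + apply Rle_trans with (x i); auto; apply Rmax_l.
    + apply Rmax_lub; auto.
  - intros i Hi.
    assert (Hx0 : forall j, (j < n)%nat -> 0 <= x j) by (intros j Hj; destruct (Hx1 j Hj), (hX j Hj); lra).
    assert (Hy0 : forall j, (j < n)%nat -> 0 <= y j) by (intros j Hj; destruct (Hy1 j Hj), (hX j Hj); lra).
    rewrite !Fit_max by auto. rewrite <- RmaxRmult by apply mmax_ge0.
    destruct (Hx2 i Hi), (Hy2 i Hi). unfold cl. split.
    + apply Rmax_lub.
      * apply Rle_trans with (Rmax (Mb * Fit n b N x i) (Mb * Fit n b N y i) + eta - eta + eta); [|lra].
        pose proof (Rmax_l (Mb * Fit n b N x i) (Mb * Fit n b N y i)). lra.
      * pose proof (Rmax_r (Mb * Fit n b N x i) (Mb * Fit n b N y i)). lra.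
    + apply Rmax_lub.
      * pose proof (Rmax_l (Fit n b (S N) x i) (Fit n b (S N) y i)). lra.
      * pose proof (Rmax_r (Fit n b (S N) x i) (Fit n b (S N) y i)). lra.
Qed.

Lemma T3 eta g : 0 <= eta -> (forall e, 0 < e -> exists y, T eta y /\ forall j, (j < n)%nat -> cl e (y j) (g j)) -> T eta g.
Proof.
  intros Heta H.
  assert (HX : inX n xl xu g).
  { intros i Hi. split; apply le_eps; intros e He; destruct (H e He) as [y [[Hy _] Hc]];
      destruct (Hy i Hi); destruct (Hc i Hi); lra. }
  split; auto. intros i Hi.
  assert (Hg0 : forall j, (j < n)%nat -> 0 <= g j) by (intros j Hj; destruct (HX j Hj), (hX j Hj); lra).
  assert (HMb : 0 <= Mb) by apply mmax_ge0.
  set (c := 2 * Mb ^ S N + 1).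
  assert (Hc : 0 < c) by (unfold c; pose proof (pow_le Mb (S N) HMb); lra).
  unfold cl. split; apply le_eps; intros e He.
  - destruct (H (e / c) ltac:(apply Rdiv_lt_0_compat; auto)) as [y [[HyX Hy] Hcl]].
    assert (Hy0 : forall j, (j < n)%nat -> 0 <= y j) by (intros j Hj; destruct (HyX j Hj), (hX j Hj); lra).
    destruct (I3 n Hn b (S N) y g (e / c) i Hb ltac:(left; apply Rdiv_lt_0_compat; auto) Hy0 Hg0 Hcl Hi) as [A1 A2].
    destruct (I3 n Hn b N y g (e / c) i Hb ltac:(left; apply Rdiv_lt_0_compat; auto) Hy0 Hg0 Hcl Hi) as [A3 A4].
    destruct (Hy i Hi) as [A5 A6]. fold Mb in A1, A2, A3, A4.
    assert (Mb * Fit n b N y i <= Mb * (Fit n b N g i + Mb ^ N * (e / c))) by (apply Rmult_le_compat_l; lra).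
    assert (Mb ^ S N * (e / c) + Mb * (Mb ^ N * (e / c)) <= e).
    { simpl. replace (Mb * Mb ^ N * (e / c) + Mb * (Mb ^ N * (e / c))) with ((2 * Mb ^ S N) * (e / c)) by (simpl; ring).
      apply Rle_trans with (c * (e / c)); [apply Rmult_le_compat_r; [left; apply Rdiv_lt_0_compat; auto|unfold c; lra]|].
      right; field; lra. }
    nra.
  - destruct (H (e / c) ltac:(apply Rdiv_lt_0_compat; auto)) as [y [[HyX Hy] Hcl]].
    assert (Hy0 : forall j, (j < n)%nat -> 0 <= y j) by (intros j Hj; destruct (HyX j Hj), (hX j Hj); lra).
    destruct (I3 n Hn b (S N) y g (e / c) i Hb ltac:(left; apply Rdiv_lt_0_compat; auto) Hy0 Hg0 Hcl Hi) as [A1 A2].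
    destruct (I3 n Hn b N y g (e / c) i Hb ltac:(left; apply Rdiv_lt_0_compat; auto) Hy0 Hg0 Hcl Hi) as [A3 A4].
    destruct (Hy i Hi) as [A5 A6]. fold Mb in A1, A2, A3, A4.
    assert (Mb * Fit n b N g i <= Mb * (Fit n b N y i + Mb ^ N * (e / c))) by (apply Rmult_le_compat_l; lra).
    assert (Mb ^ S N * (e / c) + Mb * (Mb ^ N * (e / c)) <= e).
    { simpl. replace (Mb * Mb ^ N * (e / c) + Mb * (Mb ^ N * (e / c))) with ((2 * Mb ^ S N) * (e / c)) by (simpl; ring).
      apply Rle_trans with (c * (e / c)); [apply Rmult_le_compat_r; [left; apply Rdiv_lt_0_compat; auto|unfold c; lra]|].
      right; field; lra. }
    nra.
Qed.

Lemma T4 eta eta' x : eta <= eta' -> T eta x -> T eta' x.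
Proof.
  intros H [H1 H2]. split; auto. intros i Hi. destruct (H2 i Hi). unfold cl; lra.
Qed.


Definition Ep (eta : R) (i : nat) (v : R) := v = xl i \/ (0 < eta /\ (i < n)%nat /\ exists x, T eta x /\ v = x i).

Lemma Ep_bound eta i : bound (Ep eta i).
Proof.
  exists (Rmax (xl i) (xu i)). intros v [->|[_ [Hi [x [[Hx _] ->]]]]]; [apply Rmax_l|].
  apply Rle_trans with (xu i); [apply Hx; auto|apply Rmax_r].
Qed.

Lemma Ep_ex eta i : exists v, Ep eta i v.
Proof. exists (xl i). left; auto. Qed.

Definition sp eta i := proj1_sig (completeness (Ep eta i) (Ep_bound eta i) (Ep_ex eta i)).

Lemma sp_lub eta i : is_lub (Ep eta i) (sp eta i).
Proof. unfold sp. destruct (completeness _ _ _); auto. Qed.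

Lemma s1 eta x i : 0 < eta -> (i < n)%nat -> T eta x -> x i <= sp eta i.
Proof. intros He Hi Hx. apply (proj1 (sp_lub eta i)). right. split; auto. split; auto. exists x; auto. Qed.

Lemma s3 eta i : xl i <= sp eta i.
Proof. apply (proj1 (sp_lub eta i)). left; auto. Qed.

Lemma s2 eta i e : 0 < eta -> (i < n)%nat -> 0 < e -> exists x, T eta x /\ sp eta i - e < x i.
Proof.
  intros He Hi Hee. destruct (Classical_Prop.classic (exists x, T eta x /\ sp eta i - e < x i)) as [H|H]; auto.
  exfalso. assert (Hub : is_upper_bound (Ep eta i) (sp eta i - e)).
  { intros v [->|[_ [_ [x [Hx ->]]]]].
    - destruct (T1 eta He) as [x0 Hx0]. apply Rle_trans with (x0 i).
      + apply (proj1 Hx0); auto.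
      + destruct (Rle_dec (x0 i) (sp eta i - e)); auto. exfalso; apply H; exists x0; split; auto; lra.
    - destruct (Rle_dec (x i) (sp eta i - e)); auto. exfalso; apply H; exists x; split; auto; lra. }
  pose proof (proj2 (sp_lub eta i) _ Hub). lra.
Qed.

Lemma s4 eta eta' i : 0 < eta -> eta <= eta' -> sp eta i <= sp eta' i.
Proof.
  intros He Hee. apply (proj2 (sp_lub eta i)). intros v [->|[H0 [Hi [x [Hx ->]]]]].
  - apply s3.
  - apply s1; auto; [lra|]. apply T4 with eta; auto.
Qed.

Definition Fi (i : nat) (v : R) := exists eta, 0 < eta /\ v = - sp eta i.
Lemma Fi_bound i : bound (Fi i).
Proof. exists (- xl i). intros v [eta [_ ->]]. pose proof (s3 eta i). lra. Qed.
Lemma Fi_ex i : exists v, Fi i v.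
Proof. exists (- sp 1 i). exists 1. split; auto; lra. Qed.
Definition gl i := - proj1_sig (completeness (Fi i) (Fi_bound i) (Fi_ex i)).
Lemma gl_lub i : is_lub (Fi i) (- gl i).
Proof. unfold gl. rewrite Ropp_involutive. destruct (completeness _ _ _); auto. Qed.

Lemma g1 eta i : 0 < eta -> gl i <= sp eta i.
Proof.
  intros He. assert (- sp eta i <= - gl i) by (apply (proj1 (gl_lub i)); exists eta; auto). lra.
Qed.

Lemma g2 i e : 0 < e -> exists eta, 0 < eta /\ sp eta i <= gl i + e.
Proof.
  intros He. destruct (Classical_Prop.classic (exists eta, 0 < eta /\ sp eta i <= gl i + e)) as [H|H]; auto.
  exfalso. assert (Hub : is_upper_bound (Fi i) (- gl i - e)).
  { intros v [eta [Heta ->]]. destruct (Rle_dec (sp eta i) (gl i + e)).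
    - exfalso; apply H; exists eta; auto.
    - lra. }
  pose proof (proj2 (gl_lub i) _ Hub). lra.
Qed.

Lemma T_gl eta : 0 < eta -> T eta gl.
Proof.
  intros Heta. apply T3; [lra|]. intros e He.
  assert (SA : forall p, (p <= n)%nat -> exists eta', 0 < eta' <= eta /\ forall i, (i < p)%nat -> sp eta' i <= gl i + e).
  { induction p; intros Hp.
    - exists eta. split; [lra|]. intros; lia.
    - destruct IHp as [eta1 [H1 H2]]; [lia|]. destruct (g2 p e He) as [eta2 [H3 H4]].
      exists (Rmin eta1 eta2). split.
      + split; [apply Rmin_pos; lra|]. apply Rle_trans with eta1; [apply Rmin_l|lra].
      + intros i Hi. destruct (Nat.eq_dec i p) as [->|Hne].
        * apply Rle_trans with (sp eta2 p); auto. apply s4; [apply Rmin_pos; lra|apply Rmin_r].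
        * apply Rle_trans with (sp eta1 i); [|apply H2; lia]. apply s4; [apply Rmin_pos; lra|apply Rmin_l]. }
  destruct (SA n (le_n n)) as [eta' [[Hpos Hle] HA]].
  assert (SB : forall p, (p <= n)%nat -> exists y, T eta' y /\ forall i, (i < p)%nat -> sp eta' i - e <= y i).
  { induction p; intros Hp.
    - destruct (T1 eta' Hpos) as [y Hy]. exists y. split; auto. intros; lia.
    - destruct IHp as [y [Hy1 Hy2]]; [lia|]. destruct (s2 eta' p e Hpos ltac:(lia) He) as [z [Hz1 Hz2]].
      exists (fun j => Rmax (y j) (z j)). split; [apply T2; auto|].
      intros i Hi. destruct (Nat.eq_dec i p) as [->|Hne].
      * pose proof (Rmax_r (y p) (z p)). lra.
      * pose proof (Rmax_l (y i) (z i)). pose proof (Hy2 i ltac:(lia)). lra. }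
  destruct (SB n (le_n n)) as [y [Hy1 Hy2]].
  exists y. split; [apply T4 with eta'; auto|].
  intros j Hj. pose proof (s1 eta' y j Hpos Hj Hy1). pose proof (HA j Hj). pose proof (Hy2 j Hj).
  pose proof (g1 eta' j Hpos). unfold cl. lra.
Qed.

Lemma limit_main : exists x, inX n xl xu x /\ eqL b x.
Proof.
  exists gl. split; [apply (proj1 (T_gl 1 ltac:(lra)))|].
  intros i Hi. apply Rle_antisym; apply le_eps; intros e He;
    destruct (T_gl e He) as [_ H]; destruct (H i Hi); fold Mb; lra.
Qed.

End Limit.
Section Final.
Variable n : nat.
Hypothesis Hn : (0 < n)%nat.

Lemma zero_Fo a y i : nonneg n a -> mmax n a = 0 -> Fo n a y i = 0.
Proof.
  intros Ha H0. unfold Fo, mvec. apply Rle_antisym; [|apply mmax_ge0].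
  apply mmax_le; [lra|]. intros j Hj.
  assert (0 <= circ n a i j) by (apply circ_nonneg; auto).
  assert (circ n a i j <= 0) by (rewrite <- H0; apply circ_le_mmax; auto).
  replace (circ n a i j) with 0 by lra. lra.
Qed.

Lemma AttrEq a x N : nonneg n a -> (forall j, (j < n)%nat -> 0 <= x j) -> (n - 1 <= N)%nat ->
  (Attr n (circ n a) x <-> eqL n N a x).
Proof.
  intros Ha Hx HN. unfold Attr, eqL. rewrite lam_circ by auto.
  assert (Hb : forall t i, (i < n)%nat -> mvec n (mpow n (circ n a) t) x i = Fit n a t x i)
    by (intros; apply Fit_mpow; auto).
  split.
  - intros [t0 H0].
    destruct (Req_dec (mmax n a) 0) as [Z|NZ].
    + intros i Hi. rewrite Z, Rmult_0_l. simpl. apply zero_Fo; auto.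
    + destruct (mmax_ex n a) as [k [Hk E]]; auto.
      assert (Hmax : forall s, (s < n)%nat -> a s <= a k) by (intros; rewrite <- E; apply mmax_ge; auto).
      assert (Hpos : 0 < a k) by (pose proof (mmax_ge0 n a); lra).
      assert (Hq : Qc n a k x).
      { apply (AQ n Hn a Ha k Hk Hmax x t0); auto. intros i Hi. rewrite <- !Hb, <- E by auto. apply H0; auto. }
      intros i Hi. rewrite E. apply (QA n Hn a Ha k Hk Hmax x); auto.
  - intros H. exists N. intros i Hi. rewrite !Hb by auto. apply H; auto.
Qed.

Lemma AttrZero a x : nonneg n a -> mmax n a = 0 -> (forall j, (j < n)%nat -> 0 <= x j) -> Attr n (circ n a) x.
Proof.
  intros Ha Z Hx. apply (AttrEq a x (n - 1)); auto. intros i Hi. rewrite Z, Rmult_0_l. simpl. apply zero_Fo; auto.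
Qed.

Lemma AttrQc a k x : nonneg n a -> (k < n)%nat -> (forall s, (s < n)%nat -> a s <= a k) -> 0 < a k ->
  (forall j, (j < n)%nat -> 0 <= x j) -> (Attr n (circ n a) x <-> Qc n a k x).
Proof.
  intros Ha Hk Hmax Hpos Hx.
  assert (E : mmax n a = a k).
  { apply Rle_antisym; [apply mmax_le; auto; lra|apply mmax_ge; auto]. }
  rewrite (AttrEq a x (n - 1)) by auto. unfold eqL. rewrite E. split.
  - intros H. apply (AQ n Hn a Ha k Hk Hmax x (n - 1)); auto.
  - intros H. apply (QA n Hn a Ha k Hk Hmax x); auto.
Qed.

Lemma Mono a b k x : nonneg n a -> nonneg n b -> (k < n)%nat -> 0 < a k -> 0 < b k ->
  (forall s, (s < n)%nat -> a s * b k <= b s * a k) -> (forall j, (j < n)%nat -> 0 <= x j) ->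
  Qc n a k x -> Qc n b k x.
Proof.
  intros Ha Hb Hk Hak Hbk Hr Hx H i j Hi.
  set (c := b k / a k).
  assert (Hc : 0 < c) by (apply Rdiv_lt_0_compat; auto).
  apply Rle_trans with (Fit n (fun s => c * a s) (n - 1) x i).
  - rewrite Fit_ascal by (auto; lra).
    replace (b k) with (c * a k) by (unfold c; field; lra). rewrite Rpow_mult_distr, Rmult_assoc.
    apply Rmult_le_compat_l; [apply pow_le; lra|]. apply H; auto.
  - apply Fit_amono; auto.
    + intros s Hs. apply Rmult_le_pos; [lra|apply Ha; auto].
    + intros s Hs. unfold c. apply Rmult_le_reg_r with (a k); auto.
      replace (b k / a k * a s * a k) with (a s * b k) by (field; lra). apply Hr; auto.
Qed.

End Final.

Definition vl (al au : nat -> R) (lc : nat -> bool) t d := if lc t then al t else al t + Rmin d ((au t - al t) / 2).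
Definition vu (al au : nat -> R) (uc : nat -> bool) t d := if uc t then au t else au t - Rmin d ((au t - al t) / 2).

Lemma vl_ok al au lc uc t d : 0 < d ->
  0 <= al t /\ (if andb (lc t) (uc t) then al t <= au t else al t < au t) ->
  inI al au lc uc t (vl al au lc t d) /\ cl d (vl al au lc t d) (al t) /\ 0 <= vl al au lc t d.
Proof.
  intros Hd [H0 H1]. unfold inI, vl, cl.
  pose proof (Rmin_l d ((au t - al t) / 2)). pose proof (Rmin_r d ((au t - al t) / 2)).
  destruct (lc t), (uc t); simpl in H1; repeat split; try lra;
    assert (0 < Rmin d ((au t - al t) / 2)) by (apply Rmin_pos; lra); lra.
Qed.

Lemma vu_ok al au lc uc t d : 0 < d ->
  0 <= al t /\ (if andb (lc t) (uc t) then al t <= au t else al t < au t) ->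
  inI al au lc uc t (vu al au uc t d) /\ cl d (vu al au uc t d) (au t) /\ 0 <= vu al au uc t d.
Proof.
  intros Hd [H0 H1]. unfold inI, vu, cl.
  pose proof (Rmin_l d ((au t - al t) / 2)). pose proof (Rmin_r d ((au t - al t) / 2)).
  destruct (lc t), (uc t); simpl in H1; repeat split; try lra;
    assert (0 < Rmin d ((au t - al t) / 2)) by (apply Rmin_pos; lra); lra.
Qed.

Theorem theorem4 (n : nat) (xl xu : vec) (al au : nat -> R) (lc uc : nat -> bool)
  (hX : forall i, (i < n)%nat -> 0 <= xl i <= xu i)
  (hI : forall t, (t < n)%nat ->
          0 <= al t /\ (if andb (lc t) (uc t) then al t <= au t else al t < au t)) :
  (tol_robust n al au lc uc xl xu <->
     (forall k, (k < n)%nat -> exists x, inX n xl xu x /\ Attr n (Ak n al au k) x))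
  /\
  (tol_robust n al au lc uc xl xu <->
     (forall k, (k < n)%nat -> mnonzero n (Ak n al au k) ->
        exists y, inX n xl xu y /\
          forall i, (i < n)%nat ->
            lam n (Ak n al au k) * mvec n (mpow n (Ak n al au k) (n ^ 2)) y i
            = mvec n (mpow n (Ak n al au k) (n ^ 2 + 1)) y i)).
Proof.
  destruct (Nat.eq_dec n 0) as [->|Hn0].
  { assert (R : tol_robust 0 al au lc uc xl xu).
    { intros a _. exists xl. split; [intros i Hi; lia|]. exists 0%nat. intros i Hi; lia. }
    split; split; intros; auto; lia. }
  assert (Hn : (0 < n)%nat) by lia.
  assert (HxlX : inX n xl xu xl) by (intros i Hi; destruct (hX i Hi); lra).
  assert (Hxl0 : forall j, (j < n)%nat -> 0 <= xl j) by (intros j Hj; apply hX; auto).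
  assert (X0 : forall x, inX n xl xu x -> forall j, (j < n)%nat -> 0 <= x j)
    by (intros x Hx j Hj; destruct (Hx j Hj), (hX j Hj); lra).
  set (bk := fun k t => if Nat.eqb t k then au t else al t).
  assert (Hbk : forall k, nonneg n (bk k)).
  { intros k t Ht. unfold bk. destruct (hI t Ht) as [H0 H1].
    destruct (Nat.eqb t k); [|auto]. destruct (andb (lc t) (uc t)); lra. }
  assert (HN : (n - 1 <= n ^ 2)%nat) by (simpl; nia).
  assert (R12 : (forall k, (k < n)%nat -> exists x, inX n xl xu x /\ Attr n (Ak n al au k) x) <->
     (forall k, (k < n)%nat -> mnonzero n (Ak n al au k) ->
        exists y, inX n xl xu y /\
          forall i, (i < n)%nat ->
            lam n (Ak n al au k) * mvec n (mpow n (Ak n al au k) (n ^ 2)) y i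
            = mvec n (mpow n (Ak n al au k) (n ^ 2 + 1)) y i)).
  { split.
    - intros H k Hk _. destruct (H k Hk) as [x [Hx HA]]. exists x. split; auto.
      unfold Ak in *. fold (bk k) in *. apply (AttrEq n Hn (bk k) x (n ^ 2)) in HA; auto.
      intros i Hi. rewrite lam_circ by auto. rewrite Nat.add_1_r.
      rewrite !Fit_mpow by auto. symmetry. apply HA; auto.
    - intros H k Hk. destruct (Classical_Prop.classic (mnonzero n (Ak n al au k))) as [NZ|Z].
      + destruct (H k Hk NZ) as [y [Hy E]]. exists y. split; auto.
        unfold Ak in *. fold (bk k) in *. apply (AttrEq n Hn (bk k) y (n ^ 2)); auto.
        intros i Hi. specialize (E i Hi). rewrite lam_circ in E by auto. rewrite Nat.add_1_r in E.
        rewrite !Fit_mpow in E by auto. symmetry; auto.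
      + exists xl. split; auto. unfold Ak. fold (bk k). apply (AttrZero n Hn); [apply Hbk| |auto].
        apply Rle_antisym; [|apply mmax_ge0]. apply mmax_le; [lra|]. intros t Ht.
        destruct (Req_dec (bk k t) 0) as [E|NE]; [lra|]. exfalso. apply Z.
        exists 0%nat, t. repeat split; auto. unfold Ak, circ.
        replace ((t + n - 0) mod n)%nat with t; auto.
        replace (t + n - 0)%nat with (t + 1 * n)%nat by lia. rewrite Nat.Div0.mod_add, Nat.mod_small; auto. }
  assert (R1 : tol_robust n al au lc uc xl xu <->
     (forall k, (k < n)%nat -> exists x, inX n xl xu x /\ Attr n (Ak n al au k) x)).
  { split.
    - intros Hrob k Hk. unfold Ak. fold (bk k).
      destruct (limit_main n Hn xl xu hX (bk k) (Hbk k) (n ^ 2)) as [x [Hx Heq]].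
      + intros d Hd.
        set (a := fun t => if Nat.eqb t k then vu al au uc t d else vl al au lc t d).
        assert (Ha : forall t, (t < n)%nat -> inI al au lc uc t (a t) /\ cl d (a t) (bk k t) /\ 0 <= a t).
        { intros t Ht. unfold a, bk. destruct (Nat.eqb t k); [apply vu_ok|apply vl_ok]; auto. }
        destruct (Hrob a) as [x [Hx HA]]; [intros t Ht; apply Ha; auto|].
        exists a, x. assert (Han : nonneg n a) by (intros t Ht; apply Ha; auto).
        split; [auto|]. split; [intros s Hs; apply Ha; auto|]. split; [auto|].
        apply (AttrEq n Hn a x (n ^ 2)); auto.
      + exists x. split; auto. apply (AttrEq n Hn (bk k) x (n ^ 2)); auto.
    - intros H a Ha.
      assert (Han : nonneg n a).
      { intros t Ht. destruct (Ha t Ht) as [H1 _]. destruct (hI t Ht) as [H0 _].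
        destruct (lc t); lra. }
      assert (Hlo : forall t, (t < n)%nat -> al t <= a t).
      { intros t Ht. destruct (Ha t Ht) as [H1 _]. destruct (lc t); lra. }
      assert (Hhi : forall t, (t < n)%nat -> a t <= au t).
      { intros t Ht. destruct (Ha t Ht) as [_ H1]. destruct (uc t); lra. }
      destruct (Req_dec (mmax n a) 0) as [Z|NZ].
      + exists xl. split; auto. apply (AttrZero n Hn); auto.
      + destruct (mmax_ex n a) as [k [Hk E]]; auto.
        assert (Hmax : forall s, (s < n)%nat -> a s <= a k) by (intros; rewrite <- E; apply mmax_ge; auto).
        assert (Hpos : 0 < a k) by (pose proof (mmax_ge0 n a); lra).
        destruct (H k Hk) as [x [Hx HA]]. exists x. split; auto.
        unfold Ak in HA. fold (bk k) in HA.
        assert (Hbkk : bk k k = au k) by (unfold bk; rewrite Nat.eqb_refl; auto).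
        assert (Hbmax : forall s, (s < n)%nat -> bk k s <= bk k k).
        { intros s Hs. rewrite Hbkk. unfold bk. destruct (Nat.eqb_spec s k) as [->|]; [lra|].
          apply Rle_trans with (a s); auto. apply Rle_trans with (a k); auto. }
        assert (Hbpos : 0 < bk k k) by (rewrite Hbkk; pose proof (Hhi k Hk); lra).
        apply (AttrQc n Hn (bk k) k x) in HA; auto.
        apply (AttrQc n Hn a k x); auto.
        apply (Mono n Hn (bk k) a k x); auto.
        intros s Hs. rewrite Hbkk. unfold bk. destruct (Nat.eqb_spec s k) as [->|]; [lra|].
        apply Rmult_le_compat; auto. apply (Hbk k s) in Hs. unfold bk in Hs.
        destruct (Nat.eqb_spec s k); [congruence|auto]. }
  split; auto. rewrite R1. auto.
Qed.
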